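(* For $n\ge3$ and $1\le k_1<k_2\le n-1$, $$\begin{aligned}E\Big[E[1_{k_2}^{(n)}\mid\mathcal{Y}_n]\,E[1_{k_1}^{(n)}\mid\mathcal{Y}_n]\Big]={}&\frac{4(n+1)^2}{(n-1)^2(k_1+1)(k_1+2)(k_2+1)(k_2+2)}\\&-\frac{8(n+1)\,(3n-(k_2-2))\,(n-(k_2+1))}{n(n-1)^2(k_1+1)(k_1+2)(k_2+1)(k_2+2)(k_2+3)(k_2+4)}.\end{aligned}$$
   Context: Fix $n\ge 3$. A Yule tree with speciation rate 1 on $n$ tips: start with a single lineage; each lineage independently splits into two at rate 1; the process is stopped just before the $n$-th speciation event, so the tree has $n$ tips and $n-1$ speciation (internal) nodes, numbered $1,\dots,n-1$ chronologically from the root; at each speciation the splitting lineage is uniformly chosen among current lineages. $\mathcal{Y}_n$ is the σ-field generated by the tree (topology and branch lengths). For $1\le k\le n-1$, $1_k^{(n)}$ is the indicator that an unordered pair of distinct tips, chosen uniformly at random (independently of everything else given the tree), has its most recent common ancestor at the $k$-th speciation event; thus $E[1_k^{(n)}\mid\mathcal{Y}_n]$ is the fraction of the $\binom n2$ pairs of tips that coalesce at the $k$-th speciation event. *)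

(* Defs.v *)
From HB Require Import structures.
From mathcomp Require Import all_boot all_order all_algebra.
Set Implicit Arguments. Unset Strict Implicit. Unset Printing Implicit Defensive.
Import Order.TTheory GRing.Theory Num.Theory.
Local Open Scope ring_scope.

(* A realisation of the sequence of splitting choices of a Yule tree on n tips:
   at the k-th speciation event (k = 1..n-1) there are k lineages, labelled
   0..k-1, and the splitting one is x (k-1) : 'I_k.  After the split, the two
   daughter lineages get labels (old label) and k.  Under the Yule process the
   choices are independent and uniform, i.e. x is uniform on this finite type. *)
Definition YuleChoice (n : nat) := {dffun forall k : 'I_n.-1, 'I_k.+1}.

Definition chc (n : nat) (x : YuleChoice n) (k : nat) : nat :=
  match @insub nat (fun i => i < n.-1)%N _ k.-1 with
  | Some o => nat_of_ord (x o)
  | None => 0%N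
  end.

(* number of tips descending from lineage i at stage j (after j events),
   with m = number of remaining speciation events *)
Fixpoint descF (c : nat -> nat) (m j i : nat) : nat :=
  match m with
  | 0 => 1%N
  | m'.+1 =>
      if i == c j.+1 then (descF c m' j.+1 i + descF c m' j.+1 j.+1)%N
      else descF c m' j.+1 i
  end.

Definition desc n (x : YuleChoice n) (j i : nat) : nat :=
  descF (chc x) (n.-1 - j) j i.

(* number of unordered pairs of tips whose MRCA is the k-th speciation event *)
Definition pairs_at n (x : YuleChoice n) (k : nat) : nat :=
  (desc x k (chc x k) * desc x k k)%N.

(* E[1_k^{(n)} | Y_n] : fraction of the binom(n,2) pairs coalescing at event k *)
Definition condE1 n (x : YuleChoice n) (k : nat) : rat :=
  (pairs_at x k)%:R / ('C(n, 2))%:R.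

Definition yuleE n (F : YuleChoice n -> rat) : rat :=
  (\sum_(x : YuleChoice n) F x) / (#|{: YuleChoice n}|)%:R.

(* Main.v *)
Require Import Defs.
From mathcomp Require Import all_boot all_order all_algebra.
From mathcomp Require Import zify ring lra.
From Stdlib Require Import FunctionalExtensionality.
Import GRing.Theory Num.Theory.
Local Open Scope ring_scope.

Lemma chcE {n} (x : YuleChoice n) (k : 'I_n.-1) : chc x k.+1 = x k.
Proof.
rewrite /chc /=; case: insubP => [u _ uE|]; last by rewrite ltn_ord.
by have -> : u = k by apply: val_inj.
Qed.

Lemma chc0 {n} (x : YuleChoice n) : chc x 0 = 0%N.
Proof.
rewrite /chc /=; case: insubP => [u _ uE|//].
have := ltn_ord (x u); set v := nat_of_ord (x u); clearbody v; rewrite uE /=; lia.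
Qed.

Lemma chc_out {n} (x : YuleChoice n) t : (n <= t)%N -> chc x t = 0%N.
Proof.
move=> h; rewrite /chc; case: insubP => [u ut _|//].
by exfalso; move: ut h; case: n {x u} => [|n] /=; case: t => //= t; lia.
Qed.

Definition upd (c : nat -> nat) (k a : nat) : nat -> nat :=
  fun t => if t == k then a else c t.

Fixpoint isum (j m : nat) (c : nat -> nat) (F : (nat -> nat) -> rat) : rat :=
  match m with
  | 0 => F c
  | m'.+1 => \sum_(a < j.+1) isum j.+1 m' (upd c j.+1 a) F
  end.

Definition agree {n} (x : YuleChoice n) j (c : nat -> nat) :=
  all (fun t => chc x t == c t) (iota 1 j).

Lemma sum_isum n m j (c : nat -> nat) (F : (nat -> nat) -> rat) : (j + m = n.-1)%N ->
  (forall t, (t == 0%N) || (j < t)%N -> c t = 0%N) ->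
  (forall t, (0 < t <= j)%N -> (c t < t)%N) ->
  \sum_(x : YuleChoice n | agree x j c) F (chc x) = isum j m c F.
Proof.
elim: m j c => [|m IH] j c /=.
  rewrite addn0 => jn c0 clt.
  pose xc : YuleChoice n := finfun (fun k : 'I_n.-1 => (inord (c k.+1) : 'I_k.+1)).
  have xcE (k : 'I_n.-1) : nat_of_ord (xc k) = c k.+1.
    rewrite ffunE inordK //; apply: clt; rewrite jn; have := ltn_ord k; lia.
  have cxc : chc xc = c.
    apply: functional_extensionality => t.
    case: t => [|t]; first by rewrite chc0 c0.
    case: (ltnP t n.-1) => ht.
      by rewrite (chcE xc (Ordinal ht)) xcE.
    rewrite chc_out ?c0 //; [rewrite jn|]; lia.
  rewrite (big_pred1 xc) ?cxc // => x /=.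
  apply/idP/eqP => [/allP H|->]; last first.
    apply/allP => t; rewrite mem_iota => /andP[t1 t2].
    case: t t1 t2 => [//|t] _ t2.
    have ht : (t < n.-1)%N by rewrite -jn; lia.
    by rewrite (chcE xc (Ordinal ht)) xcE.
  apply/ffunP => k; apply: val_inj => /=.
  rewrite xcE -(chcE x k); apply/eqP/H; rewrite mem_iota jn; have := ltn_ord k; lia.
move=> jn c0 clt.
have hk : (j < n.-1)%N by lia.
have chlt (x : YuleChoice n) : (chc x j.+1 < j.+1)%N.
  by rewrite (chcE x (Ordinal hk)).
rewrite (partition_big (fun x => (inord (chc x j.+1) : 'I_j.+1)) predT) //=.
apply: eq_bigr => a _.
have h1 : (j.+1 + m = n.-1)%N by lia.
have h2 : forall t, (t == 0%N) || (j.+1 < t)%N -> upd c j.+1 a t = 0%N.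
  move=> t; rewrite /upd; case: (eqVneq t j.+1) => [->|ne]; first by rewrite /= ltnn.
  move=> h; apply: c0; move/orP: h => [->//|h]; apply/orP; right; lia.
have h3 : forall t, (0 < t <= j.+1)%N -> (upd c j.+1 a t < t)%N.
  move=> t /andP[t1 t2]; rewrite /upd; case: eqP => [->|ne]; first by [].
  apply: clt; apply/andP; split; lia.
rewrite -(IH _ _ h1 h2 h3).
apply: eq_bigl => x; rewrite /agree.
have -> : iota 1 j.+1 = iota 1 j ++ [:: j.+1] by rewrite -[in LHS](addn1 j) iotaD.
rewrite all_cat /= andbT.
rewrite -(inj_eq val_inj) /= inordK // {2}/upd eqxx.
congr andb; apply: eq_in_all => t; rewrite mem_iota => /andP[_ ht].
by rewrite /upd ifN //; apply/eqP; lia.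
Qed.

Lemma isum_ext j m c F G : (forall c', F c' = G c') -> isum j m c F = isum j m c G.
Proof. by move=> H; elim: m j c => [|m IH] j c /=; [apply: H| apply: eq_bigr => a _; apply: IH]. Qed.

Lemma isumD j m c F G :
  isum j m c (fun c' => F c' + G c') = isum j m c F + isum j m c G.
Proof.
elim: m j c => [|m IH] j c //=; rewrite -big_split; apply: eq_bigr => a _; apply: IH.
Qed.

Lemma isumZ j m c r F : isum j m c (fun c' => r * F c') = r * isum j m c F.
Proof.
elim: m j c => [|m IH] j c //=; rewrite mulr_sumr; apply: eq_bigr => a _; apply: IH.
Qed.

Fixpoint cnt (j m : nat) : rat :=
  match m with 0 => 1 | m'.+1 => j.+1%:R * cnt j.+1 m' end.

Lemma isum_const j m c r : isum j m c (fun _ => r) = cnt j m * r.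
Proof.
elim: m j c => [|m IH] j c /=; first by rewrite mul1r.
under eq_bigr do rewrite IH.
by rewrite sumr_const card_ord -mulrA mulr_natl.
Qed.

Lemma isum_loc j m c F G :
  (forall c', (forall t, (t <= j)%N -> c' t = c t) -> F c' = G c') ->
  isum j m c F = isum j m c G.
Proof.
elim: m j c => [|m IH] j c H /=; first by apply: H.
apply: eq_bigr => a _; apply: IH => c' Hc'; apply: H => t tj.
by rewrite Hc' ?/upd ?ifN //; [apply/eqP; lia | lia].
Qed.

Lemma isum_split j m1 m2 c F :
  isum j (m1 + m2) c F = isum j m1 c (fun c' => isum (j + m1) m2 c' F).
Proof.
elim: m1 j c => [|m1 IH] j c /=; first by rewrite addn0.
by apply: eq_bigr => a _; rewrite IH addSnnS.
Qed.

Notation D c m j i := ((descF c m j i)%:R : rat).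

Lemma isum_step j m c (F : (nat -> nat) -> rat)
  (Phi : (nat -> rat) -> nat -> (nat -> nat) -> rat) :
  (forall c', F c' = Phi (fun i => D c' m.+1 j i) (c' j.+1) c') ->
  isum j m.+1 c F = \sum_(a < j.+1) isum j.+1 m (upd c j.+1 a)
     (fun c' => Phi (fun i => D c' m j.+1 i + (i == a)%:R * D c' m j.+1 j.+1) a c').
Proof.
move=> HF /=; apply: eq_bigr => a _; apply: isum_loc => c' Hc'; rewrite HF.
have ca : c' j.+1 = a by rewrite Hc' // /upd eqxx.
rewrite ca; congr Phi; apply: functional_extensionality => i.
rewrite /= ca; case: (i == a); rewrite ?natrD ?mulr1n ?mulr0n ?mul1r ?mul0r ?addr0 //.
Qed.

Lemma sum_ind k a : (a < k)%N -> \sum_(i < k) (((a == i :> nat) : nat)%:R : rat) = 1.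
Proof.
move=> ak; rewrite (bigD1 (Ordinal ak)) //= eqxx big1 ?addr0 // => i ne.
suff /negbTE -> : a != i by [].
apply: contra ne => /eqP e; apply/eqP/val_inj; by rewrite /= e.
Qed.

Lemma excl (a b x : nat) : a != b -> ~~ ((a == x) && (b == x)).
Proof. by move=> ab; apply/negP => /andP[/eqP e1 /eqP e2]; rewrite e1 e2 eqxx in ab. Qed.

Ltac posnz := repeat (apply/andP; split); apply: lt0r_neq0; lra.

Definition e4 (j m : nat) : rat := let J := j%:R in let M := m%:R in
  (J+M+1)*(J+M+2)*(J+M+3)*(J+M+4) / ((J+1)*(J+2)*(J+3)*(J+4)).
Definition e3 (j m : nat) : rat := let J := j%:R in let M := m%:R in
  (J+M+1)*(J+M+2)*(J+M+3) / ((J+1)*(J+2)*(J+3)).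
Definition e211 (j m : nat) : rat := 2 * e4 j m - e3 j m.

Lemma exp4 (da db dd de : bool) (xa xb xd xe y : rat) :
 ~~(da && db) -> ~~(da && dd) -> ~~(da && de) -> ~~(db && dd) -> ~~(db && de) ->
 ~~(dd && de) ->
 (xa + da%:R * y) * (xb + db%:R * y) * (xd + dd%:R * y) * (xe + de%:R * y)
 = xa * xb * xd * xe + da%:R * (y * xb * xd * xe) + db%:R * (xa * y * xd * xe)
   + dd%:R * (xa * xb * y * xe) + de%:R * (xa * xb * xd * y).
Proof. by case: da; case: db; case: dd; case: de => //= *; ring. Qed.

Lemma mom4 m : forall j c a b d e, a != b -> a != d -> a != e -> b != d ->
  b != e -> d != e -> (a <= j)%N -> (b <= j)%N -> (d <= j)%N -> (e <= j)%N ->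
  isum j m c (fun c' => D c' m j a * D c' m j b * D c' m j d * D c' m j e)
  = cnt j m * e4 j m.
Proof.
elim: m => [|m IH] j c a b d e ab ad ae bd be de aj bj dj ej.
  have J0 := ler0n rat j.
  rewrite /= /e4 addr0; field; posnz.
rewrite (isum_step _ _ _ _ (fun v _ _ => v a * v b * v d * v e)) //.
transitivity (\sum_(a' < j.+1) (cnt j.+1 m * e4 j.+1 m) *
  (1 + (a == a')%:R + (b == a')%:R + (d == a')%:R + (e == a')%:R)).
  apply: eq_bigr => a' _.
  under isum_ext => c' do rewrite (exp4 _ _ _ _ _ _ _ _ _ (@excl _ _ a' ab) (@excl _ _ a' ad)
     (@excl _ _ a' ae) (@excl _ _ a' bd) (@excl _ _ a' be) (@excl _ _ a' de)).
  rewrite !isumD !isumZ !IH; try lia.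
  ring.
rewrite -mulr_sumr !big_split /= sumr_const card_ord !sum_ind //; try lia.
have J0 := ler0n rat j.
rewrite /= /e4 -!natr1; field; posnz.
Qed.

Lemma exp211 (dx dy dz : bool) (xx xy xz w : rat) :
 ~~(dx && dy) -> ~~(dx && dz) -> ~~(dy && dz) ->
 (xx + dx%:R * w) * (xx + dx%:R * w) * (xy + dy%:R * w) * (xz + dz%:R * w)
 = xx * xx * xy * xz + dx%:R * (w * w * xy * xz) + dx%:R * (2 * (xx * w * xy * xz))
   + dy%:R * (xx * xx * w * xz) + dz%:R * (xx * xx * xy * w).
Proof. by case: dx; case: dy; case: dz => //= *; ring. Qed.

Lemma mom211 m : forall j c x y z, x != y -> x != z -> y != z ->
  (x <= j)%N -> (y <= j)%N -> (z <= j)%N ->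
  isum j m c (fun c' => D c' m j x * D c' m j x * D c' m j y * D c' m j z)
  = cnt j m * e211 j m.
Proof.
elim: m => [|m IH] j c x y z xy xz yz xj yj zj.
  have J0 := ler0n rat j.
  rewrite /= /e211 /e4 /e3 addr0; field; posnz.
rewrite (isum_step _ _ _ _ (fun v _ _ => v x * v x * v y * v z)) //.
transitivity (\sum_(a' < j.+1) ((cnt j.+1 m * e211 j.+1 m) *
  (1 + (x == a')%:R + (y == a')%:R + (z == a')%:R) +
  (cnt j.+1 m * e4 j.+1 m) * (2 * (x == a')%:R))).
  apply: eq_bigr => a' _.
  under isum_ext => c' do rewrite (exp211 _ _ _ _ _ _ _ (@excl _ _ a' xy) (@excl _ _ a' xz)
     (@excl _ _ a' yz)).
  rewrite !isumD !isumZ !IH; try lia.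
  rewrite !mom4; try lia.
  ring.
rewrite big_split /= -!mulr_sumr !big_split /= sumr_const card_ord !sum_ind //; try lia.
have J0 := ler0n rat j.
rewrite /= /e211 /e4 /e3 -!natr1; field; posnz.
Qed.

Definition pk N k (c : nat -> nat) : rat := D c (N - k) k (c k) * D c (N - k) k k.
Definition Zc N k2 : rat := let K := k2%:R in
  ((K - 2) * e4 k2 (N - k2) + 4 * e211 k2 (N - k2)) / K.
Definition g N k2 j : rat := let K := k2%:R in let J := j%:R in
  K * (K + 1) / ((J + 1) * (J + 2)) * Zc N k2.

Lemma exp2 (da db : bool) (xa xb y p : rat) : ~~(da && db) ->
  (xa + da%:R * y) * (xb + db%:R * y) * p
  = xa * xb * p + da%:R * (y * xb * p) + db%:R * (xa * y * p).
Proof. by case: da; case: db => //= *; ring. Qed.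

Lemma momU N k2 t : forall j c a b, (j + t.+1 = k2)%N -> (k2 <= N)%N ->
  a != b -> (a <= j)%N -> (b <= j)%N ->
  isum j (N - j) c (fun c' => D c' (N - j) j a * D c' (N - j) j b * pk N k2 c')
  = cnt j (N - j) * g N k2 j.
Proof.
elim: t => [|t IH] j c a b jk kN ab aj bj.
  rewrite addn1 in jk; subst k2.
  have E : (N - j = (N - j.+1).+1)%N by lia.
  rewrite E; set M := (N - j.+1)%N.
  rewrite (isum_step _ _ _ _ (fun v a' c' => v a * v b *
     (D c' M j.+1 a' * D c' M j.+1 j.+1))) //.
  transitivity (\sum_(a' < j.+1) (cnt j.+1 M * e4 j.+1 M +
     (a == a')%:R * (2 * (cnt j.+1 M * e211 j.+1 M) - cnt j.+1 M * e4 j.+1 M) +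
     (b == a')%:R * (2 * (cnt j.+1 M * e211 j.+1 M) - cnt j.+1 M * e4 j.+1 M))).
    apply: eq_bigr => a' _; have a'j := ltn_ord a'.
    case: (eqVneq a a') => [ea|na].
      have nb : (b == a') = false by apply/negbTE; rewrite -ea eq_sym.
      rewrite nb -ea ?eqxx.
      transitivity (isum j.+1 M (upd c j.+1 a) (fun c' =>
        D c' M j.+1 a * D c' M j.+1 a * D c' M j.+1 b * D c' M j.+1 j.+1 +
        D c' M j.+1 j.+1 * D c' M j.+1 j.+1 * D c' M j.+1 a * D c' M j.+1 b)).
        by apply: isum_ext => c' /=; rewrite mulr1n mulr0n; ring.
      rewrite isumD !mom211; try lia.
      by rewrite mulr1n mulr0n; ring.
    case: (eqVneq b a') => [eb|nb].
      rewrite -eb ?eqxx ?(negbTE ab).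
      transitivity (isum j.+1 M (upd c j.+1 b) (fun c' =>
        D c' M j.+1 b * D c' M j.+1 b * D c' M j.+1 a * D c' M j.+1 j.+1 +
        D c' M j.+1 j.+1 * D c' M j.+1 j.+1 * D c' M j.+1 a * D c' M j.+1 b)).
        by apply: isum_ext => c' /=; rewrite mulr1n mulr0n; ring.
      rewrite isumD !mom211; try lia.
      by rewrite mulr1n mulr0n; ring.
    rewrite ?(negbTE na) ?(negbTE nb).
    transitivity (isum j.+1 M (upd c j.+1 a') (fun c' =>
        D c' M j.+1 a * D c' M j.+1 b * D c' M j.+1 a' * D c' M j.+1 j.+1)).
      by apply: isum_ext => c' /=; rewrite mulr0n; ring.
    rewrite mom4; try lia.
    by rewrite mulr0n; ring.
  rewrite !big_split -!mulr_suml sumr_const card_ord !sum_ind //; try lia.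
  have J0 := ler0n rat j.
  rewrite /= /g /Zc -!natr1; field; posnz.
have E : (N - j = (N - j.+1).+1)%N by lia.
rewrite E; set M := (N - j.+1)%N.
rewrite (isum_step _ _ _ _ (fun v _ c' => v a * v b * pk N k2 c')) //.
transitivity (\sum_(a' < j.+1) (cnt j.+1 M * g N k2 j.+1) *
  (1 + (a == a')%:R + (b == a')%:R)).
  apply: eq_bigr => a' _.
  under isum_ext => c' do rewrite (exp2 _ _ _ _ _ _ (@excl _ _ a' ab)).
  have jk' : (j.+1 + t.+1 = k2)%N by lia.
  rewrite !isumD !isumZ /M !IH; try lia.
  ring.
rewrite -mulr_sumr !big_split /= sumr_const card_ord !sum_ind //; try lia.
have J0 := ler0n rat j.
rewrite /= /g -!natr1; field; posnz.
Qed.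

Lemma cnt_split j m1 m2 : cnt j (m1 + m2) = cnt j m1 * cnt (j + m1) m2.
Proof.
elim: m1 j => [|m1 IH] j /=; first by rewrite mul1r addn0.
by rewrite IH addSnnS mulrA.
Qed.

Lemma cnt_gt0 j m : 0 < cnt j m.
Proof. elim: m j => [|m IH] j //=; apply: mulr_gt0 => //; exact: ltr0Sn. Qed.

Lemma main_sum N k1 k2 : (1 <= k1)%N -> (k1 < k2)%N -> (k2 <= N)%N ->
  isum 0 N (fun _ => 0%N) (fun c => pk N k2 c * pk N k1 c) = cnt 0 N * g N k2 k1.
Proof.
move=> k1p kk kN; destruct k1 as [|k]; first by [].
have EN : N = (k + (N - k.+1).+1)%N by lia.
rewrite {1}EN isum_split add0n.
transitivity (isum 0 k (fun _ => 0%N)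
   (fun _ => k.+1%:R * (cnt k.+1 (N - k.+1) * g N k2 k.+1))).
  apply: isum_ext => c.
  rewrite (isum_step _ _ _ _ (fun v a' c' => pk N k2 c' *
     (D c' (N - k.+1) k.+1 a' * D c' (N - k.+1) k.+1 k.+1))) //.
  transitivity (\sum_(a' < k.+1) (cnt k.+1 (N - k.+1) * g N k2 k.+1)).
    apply: eq_bigr => a' _; have a'k := ltn_ord a'.
    transitivity (isum k.+1 (N - k.+1) (upd c k.+1 a') (fun c' =>
       D c' (N - k.+1) k.+1 a' * D c' (N - k.+1) k.+1 k.+1 * pk N k2 c')).
      by apply: isum_ext => c' /=; ring.
    apply: (@momU N k2 (k2 - k.+2)); lia.
  by rewrite sumr_const card_ord mulr_natl.
rewrite isum_const.
have -> : cnt 0 N = cnt 0 k * cnt k (N - k.+1).+1.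
  by rewrite {1}EN cnt_split add0n.
rewrite /=; ring.
Qed.

Lemma bin2M n : ('C(n, 2) * 2 = n * n.-1)%N.
Proof.
elim: n => // n IH; rewrite binS bin1 mulnDl IH; case: n {IH} => //= n; lia.
Qed.

Lemma pairs_pk n (x : YuleChoice n) k : (pairs_at x k)%:R = pk n.-1 k (chc x).
Proof. by rewrite /pairs_at /desc natrM. Qed.

Theorem mainTheorem18 (n k1 k2 : nat) :
  (3 <= n)%N -> (1 <= k1)%N -> (k1 < k2)%N -> (k2 <= n - 1)%N ->
  yuleE (fun x : YuleChoice n => condE1 x k2 * condE1 x k1)
  = 4 * (n%:R + 1) ^+ 2
      / ((n%:R - 1) ^+ 2 * (k1%:R + 1) * (k1%:R + 2) * (k2%:R + 1) * (k2%:R + 2))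
    - 8 * (n%:R + 1) * (3 * n%:R - (k2%:R - 2)) * (n%:R - (k2%:R + 1))
      / (n%:R * (n%:R - 1) ^+ 2 * (k1%:R + 1) * (k1%:R + 2) * (k2%:R + 1)
         * (k2%:R + 2) * (k2%:R + 3) * (k2%:R + 4)) :> rat.
Proof.
move=> n3 k1p k12 k2n.
have Hsum (F : (nat -> nat) -> rat) :
    \sum_(x : YuleChoice n) F (chc x) = isum 0 n.-1 (fun _ => 0%N) F.
  rewrite -(@sum_isum n n.-1 0 (fun _ => 0%N) F) ?add0n //.
  by move=> t /andP[t1 t2]; lia.
have HS : \sum_(x : YuleChoice n) condE1 x k2 * condE1 x k1
    = cnt 0 n.-1 * g n.-1 k2 k1 / ('C(n, 2)%:R ^+ 2).
  rewrite /condE1.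
  transitivity (\sum_(x : YuleChoice n) (pk n.-1 k2 (chc x) * pk n.-1 k1 (chc x)) *
     ('C(n, 2)%:R ^+ 2)^-1).
    by apply: eq_bigr => x _; rewrite !pairs_pk expr2 invfM; ring.
  rewrite -mulr_suml (Hsum (fun c => pk n.-1 k2 c * pk n.-1 k1 c)) main_sum //; lia.
have HC : (#|{: YuleChoice n}|)%:R = cnt 0 n.-1 :> rat.
  have := Hsum (fun _ => 1); rewrite isum_const mulr1 => <-.
  by rewrite sumr_const.
rewrite /yuleE HS HC.
have c0 := cnt_gt0 0 n.-1.
have Hn1 : (n.-1)%:R = n%:R - 1 :> rat.
  by case: n n3 {Hsum HS HC c0 k2n} => //= n' _; rewrite -natr1 addrK.
have HCn : ('C(n, 2))%:R = n%:R * (n%:R - 1) / 2 :> rat.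
  by rewrite -Hn1 -natrM -bin2M natrM mulfK.
have k2n' : (k2 <= n.-1)%N by lia.
rewrite /g /Zc /e211 /e4 /e3 natrB // Hn1 HCn.
have hn : (3%:R <= n%:R :> rat) by rewrite ler_nat.
have hk1 : (1%:R <= k1%:R :> rat) by rewrite ler_nat.
have hk2 : (2%:R <= k2%:R :> rat) by rewrite ler_nat; lia.
field; posnz.
Qed.
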